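(* Consider the output of the Clustering procedure described in the context. Let $j' \in C$ be a client that was selected as a cluster center, and let $j \in C$ be a client with $j \in C(j')$. Then for every facility $i$ in the cluster proposition $CP(j')$ that $j'$ had at the moment it was selected as a center, $c_{ij} \le 3\, D^C_{\max}(j)$.
   Context: Metric Fault-Tolerant Facility Placement (FTFP): a finite set $F$ of facilities with opening costs $f_i\ge 0$, a finite set $C$ of clients with integer requirements $r_j\ge 1$, and connection costs $c_{ij}$ satisfying the triangle inequality (extended to a metric on $F\cup C$). A fractional solution $(\bar x,\bar y)$ assigns $\bar y_i\ge 0$ to facilities and $\bar x_{ij}\in\{0,\bar y_i\}$ to pairs (facilities may be split into co-located copies so that this holds and so that subsets of any prescribed volume below exist). For $A\subseteq F$, $\mathrm{vol}(A)=\sum_{i\in A}\bar y_i$. For a client $j$, $F_j=\{i:\bar x_{ij}>0\}$. For $A\subseteq F$ with $\mathrm{vol}(A)\ge r$, $B(j,A,r)$ denotes a subset of $A$ of volume exactly $r$ minimizing the radius $\max_{i}c_{ij}$ over the subset. The close facilities of $j$ are $F^C_j=B(j,F_j,r_j)$ and $D^C_{\max}(j)=\max_{i\in F^C_j}c_{ij}$. Clustering procedure: initially $CP(j):=F^C_j$ and $q_j:=D^C_{\max}(j)$ for all $j$ (the values $q_j$ are never changed), and every client has its requirement $r_j$ as a working value. While some client has positive working requirement: select a client $j$ with positive working requirement minimizing $q_j$ and set its working requirement to $0$; let $N(j)$ be the set of clients $j''$ with positive working requirement and $CP(j)\cap CP(j'')\neq\emptyset$; for each $j'\in N(j)$ set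 $r_{j'}:=\max(0, r_{j'}-\lceil \mathrm{vol}(CP(j)\cap CP(j'))\rceil)$ and $CP(j'):=B(j',CP(j')\setminus CP(j),r_{j'})$; then form the cluster $C(j)=\{j\}\cup N(j)\cup CP(j)$ with center $j$. *)

(* Defs.v *)
From HB Require Import structures.
From mathcomp Require Import all_boot all_order all_algebra.
Set Implicit Arguments. Unset Strict Implicit. Unset Printing Implicit Defensive.
Import Order.TTheory GRing.Theory Num.Theory.
Local Open Scope ring_scope.

Section FTFP.
Variables (R : archiRealFieldType) (F C : finType).

Definition is_metric (d : F + C -> F + C -> R) : Prop :=
  [/\ forall u, d u u = 0,
      forall u v, 0 <= d u v,
      forall u v, d u v = d v u
    & forall u v w, d u w <= d u v + d v w].

Definition cost (d : F + C -> F + C -> R) (i : F) (j : C) : R := d (inl i) (inr j).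

Definition vol (y : F -> R) (A : {set F}) : R := \sum_(i in A) y i.

Definition Fj (x : F -> C -> R) (j : C) : {set F} := [set i | 0 < x i j].

(* radius of A around j : max_{i in A} c_ij (0 for the empty set) *)
Definition radius (c : F -> C -> R) (j : C) (A : {set F}) : R :=
  \big[Num.max/0]_(i in A) c i j.

(* S is a valid choice of B(j, A, r) *)
Definition isB (y : F -> R) (c : F -> C -> R) (j : C) (A : {set F}) (r : R)
    (S : {set F}) : Prop :=
  [/\ S \subset A, vol y S = r &
      forall S' : {set F}, S' \subset A -> vol y S' = r -> radius c j S <= radius c j S'].

(* D^C_max(j), where FC j is the chosen set of close facilities F^C_j *)
Definition DCmax (c : F -> C -> R) (FC : C -> {set F}) (j : C) : R :=
  radius c j (FC j).

(* state of the clustering procedure: working requirements and CP(.) *)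
Record state := State { wreq : C -> int; cprop : C -> {set F} }.

(* N(j): clients with positive working requirement (j's has just been set
   to 0, hence j excluded) whose CP meets CP(j) *)
Definition nbrs (s : state) (j : C) : {set C} :=
  [set j2 | [&& 0 < wreq s j2, j2 != j & cprop s j :&: cprop s j2 != set0]].

Definition cluster (s : state) (j : C) : {set C + F} :=
  [set inl j] :|: (inl @: nbrs s j) :|: (inr @: cprop s j).

(* one iteration of the while loop: client j is selected as a center in
   state s, producing state s'; q are the (fixed) values q_j *)
Definition step (y : F -> R) (c : F -> C -> R) (q : C -> R)
    (s : state) (j : C) (s' : state) : Prop :=
  [/\ 0 < wreq s j,
      forall j2, 0 < wreq s j2 -> q j <= q j2,
      wreq s' j = 0 /\ cprop s' j = cprop s j,
      forall j2, j2 \in nbrs s j ->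
        wreq s' j2 = Num.max 0 (wreq s j2 - Num.ceil (vol y (cprop s j :&: cprop s j2)))
        /\ isB y c j2 (cprop s j2 :\: cprop s j) (wreq s' j2)%:~R (cprop s' j2)
    & forall j2, j2 != j -> j2 \notin nbrs s j ->
        wreq s' j2 = wreq s j2 /\ cprop s' j2 = cprop s j2].

End FTFP.

(* Main.v *)
Require Import Defs.
From HB Require Import structures.
From mathcomp Require Import all_boot all_order all_algebra.
Import Order.TTheory GRing.Theory Num.Theory.
Local Open Scope ring_scope.

Lemma le_bigmax_seq (R : realDomainType) (I : eqType) (s : seq I) (P : pred I)
  (G : I -> R) (i0 : I) :
  i0 \in s -> P i0 -> G i0 <= \big[Num.max/0]_(i <- s | P i) G i.
Proof.
elim: s => [|a s IH] //=; rewrite inE big_cons => /orP [/eqP <-|Hs] HP.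
  by rewrite HP le_max lexx.
have := IH Hs HP; case: (P a) => // H.
by rewrite le_max H orbT.
Qed.

Lemma le_radius (R : archiRealFieldType) (F C : finType) (c : F -> C -> R)
  (j : C) (A : {set F}) (i : F) : i \in A -> c i j <= radius c j A.
Proof.
move=> HA; rewrite /radius; apply: le_bigmax_seq; rewrite ?mem_index_enum //.
Qed.

Theorem lemma1 (R : archiRealFieldType) (F C : finType)
    (d : F + C -> F + C -> R) (y : F -> R) (x : F -> C -> R)
    (r : C -> nat) (FC : C -> {set F})
    (n : nat) (st : nat -> state F C) (sel : nat -> C) :
  is_metric d ->
  (forall i, 0 <= y i) ->
  (forall i j, x i j = 0 \/ x i j = y i) ->
  (forall j, (0 < r j)%N) ->
  (forall j, isB y (cost d) j (Fj x j) (r j)%:R (FC j)) ->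
  (forall j, wreq (st 0%N) j = (r j)%:Z /\ cprop (st 0%N) j = FC j) ->
  (forall k, (k < n)%N ->
     step y (cost d) (DCmax (cost d) FC) (st k) (sel k) (st k.+1)) ->
  forall (k : nat) (j : C) (i : F),
    (k < n)%N ->
    inl j \in cluster (st k) (sel k) ->
    i \in cprop (st k) (sel k) ->
    cost d i j <= 3 * DCmax (cost d) FC j.
Proof.
move=> [d0 dge dsym dtri] _ _ _ _ H0 Hstep k j i Hk Hj Hi.
have inv : forall m, (m <= n)%N -> forall j2, cprop (st m) j2 \subset FC j2.
  elim=> [|m IH] Hm j2; first by rewrite (proj2 (H0 j2)).
  have Hm' : (m < n)%N by [].
  have IHm := IH (ltnW Hm').
  have [_ _ [_ Hs] Hn Ho] := Hstep m Hm'.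
  case: (eqVneq j2 (sel m)) => [->|ne]; first by rewrite Hs IHm.
  case: (boolP (j2 \in nbrs (st m) (sel m))) => Hnb.
    have [_ [sub _ _]] := Hn _ Hnb.
    apply: subset_trans sub _; apply: subset_trans (IHm j2).
    exact: subsetDl.
  by rewrite (proj2 (Ho _ ne Hnb)).
have Hinv := inv k (ltnW Hk).
have Hdn : forall a b, 0 <= cost d a b by move=> a b; exact: dge.
set j' := sel k in Hj Hi.
have Hij' : cost d i j' <= DCmax (cost d) FC j'.
  by apply: le_radius; apply: (subsetP (Hinv j')).
have Dge : 0 <= DCmax (cost d) FC j' by apply: le_trans Hij'.
move: Hj; rewrite /cluster !inE => /orP [/orP [/eqP [->]|]|].
- apply: le_trans Hij' _; apply: ler_peMl => //.
  by rewrite ler1n.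
- case/imsetP=> j2 Hnb [Ej]; subst j2.
  move: (Hnb); rewrite /nbrs inE => /and3P [Hw _ /set0Pn [i' /setIP [Hi'1 Hi'2]]].
  have [_ Hq _ _ _] := Hstep k Hk.
  have Hq' := Hq _ Hw.
  have h1 : cost d i' j' <= DCmax (cost d) FC j'.
    by apply: le_radius; apply: (subsetP (Hinv j')).
  have h2 : cost d i' j <= DCmax (cost d) FC j.
    by apply: le_radius; apply: (subsetP (Hinv j)).
  have tri : cost d i j <= cost d i j' + cost d i' j' + cost d i' j.
    rewrite /cost; apply: le_trans (dtri _ (inr j') _) _.
    rewrite -addrA lerD2l; apply: le_trans (dtri _ (inl i') _) _.
    by rewrite (dsym (inr j') (inl i')).
  apply: le_trans tri _.
  have -> : 3 * DCmax (cost d) FC j = DCmax (cost d) FC j + DCmax (cost d) FC j + DCmax (cost d) FC j.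
    by rewrite mulr_natl !mulrS mulr0n addr0 addrA.
  by rewrite !lerD // (le_trans _ Hq').
- by case/imsetP.
Qed.
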